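(* Let $(L,\exists)$ be a quantum monadic algebra and $a\in L$ with $\exists a=a$. Then the interval $[0,a]=\{x\in L: x\le a\}$, with the lattice operations of $L$, bounds $0,a$, orthocomplement $x^\#=a\wedge x^\perp$, and the restriction of $\exists$, is a quantum monadic algebra. Moreover, with $C(a)=\{x\in L: a\text{ commutes with }x\}$ (a subalgebra of $(L,\exists)$), the map $x\mapsto(x\wedge a,\,x\wedge a^\perp)$ is an isomorphism of quantum monadic algebras from $(C(a),\exists)$ onto the product $([0,a],\exists)\times([0,a^\perp],\exists)$, where $[0,a^\perp]$ carries orthocomplement $x\mapsto a^\perp\wedge x^\perp$.
   Context: An orthomodular lattice (OML) is a bounded lattice with a unary operation $\perp$ that is order-inverting, of period two, satisfies $x\wedge x^\perp=0$, $x\vee x^\perp=1$, and $x\le y\Rightarrow x\vee(x^\perp\wedge y)=y$. A quantum monadic algebra $(L,\exists)$ is an OML with a unary operation $\exists$ satisfying (Q1) $\exists 0=0$; (Q2) $p\le\exists p$; (Q3) $\exists(p\vee q)=\exists p\vee\exists q$; (Q4) $\exists\exists p=\exists p$; (Q5) $\exists(\exists p)^\perp=(\exists p)^\perp$. Elements $x,y$ of an OML commute if $x=(x\wedge y)\vee(x\wedge y^\perp)$. *)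

(* Defs.v *)
(* An algebra signature (join, meet, orthocomplement, 0, 1, quantifier) on a
   carrier type, and the axioms of orthomodular lattices / quantum monadic
   algebras, relativized to a carrier predicate S (so that sub-structures such
   as intervals [0,a] of an ambient algebra can be expressed directly). *)

Record qops (T : Type) := QOps {
  jn : T -> T -> T;
  mt : T -> T -> T;
  cp : T -> T;
  zr : T;
  on : T;
  ex : T -> T
}.
Arguments QOps {T}.
Arguments jn {T}. Arguments mt {T}. Arguments cp {T}.
Arguments zr {T}. Arguments on {T}. Arguments ex {T}.

Definition qle {T} (o : qops T) (x y : T) : Prop := mt o x y = x.

Record OML_on {T} (S : T -> Prop) (o : qops T) : Prop := {
  cl_jn : forall x y, S x -> S y -> S (jn o x y);
  cl_mt : forall x y, S x -> S y -> S (mt o x y);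
  cl_cp : forall x, S x -> S (cp o x);
  cl_zr : S (zr o);
  cl_on : S (on o);
  jn_comm : forall x y, S x -> S y -> jn o x y = jn o y x;
  mt_comm : forall x y, S x -> S y -> mt o x y = mt o y x;
  jn_assoc : forall x y z, S x -> S y -> S z -> jn o x (jn o y z) = jn o (jn o x y) z;
  mt_assoc : forall x y z, S x -> S y -> S z -> mt o x (mt o y z) = mt o (mt o x y) z;
  absorb_jm : forall x y, S x -> S y -> jn o x (mt o x y) = x;
  absorb_mj : forall x y, S x -> S y -> mt o x (jn o x y) = x;
  zr_le : forall x, S x -> qle o (zr o) x;
  le_on : forall x, S x -> qle o x (on o);
  cp_anti : forall x y, S x -> S y -> qle o x y -> qle o (cp o y) (cp o x);
  cp_invol : forall x, S x -> cp o (cp o x) = x;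
  cp_mt : forall x, S x -> mt o x (cp o x) = zr o;
  cp_jn : forall x, S x -> jn o x (cp o x) = on o;
  orthomod : forall x y, S x -> S y -> qle o x y -> jn o x (mt o (cp o x) y) = y
}.

Record QMA_on {T} (S : T -> Prop) (o : qops T) : Prop := {
  qma_oml : OML_on S o;
  cl_ex : forall x, S x -> S (ex o x);
  Q1 : ex o (zr o) = zr o;
  Q2 : forall p, S p -> qle o p (ex o p);
  Q3 : forall p q, S p -> S q -> ex o (jn o p q) = jn o (ex o p) (ex o q);
  Q4 : forall p, S p -> ex o (ex o p) = ex o p;
  Q5 : forall p, S p -> ex o (cp o (ex o p)) = cp o (ex o p)
}.

Definition QMA {T} (o : qops T) : Prop := QMA_on (fun _ => True) o.

Definition commutes {T} (o : qops T) (x y : T) : Prop :=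
  x = jn o (mt o x y) (mt o x (cp o y)).

Definition subalgebra {T} (o : qops T) (S : T -> Prop) : Prop :=
  (forall x y, S x -> S y -> S (jn o x y)) /\
  (forall x y, S x -> S y -> S (mt o x y)) /\
  (forall x, S x -> S (cp o x)) /\ S (zr o) /\ S (on o) /\
  (forall x, S x -> S (ex o x)).

Definition interval {T} (o : qops T) (a : T) : T -> Prop := fun x => qle o x a.
Definition interval_ops {T} (o : qops T) (a : T) : qops T :=
  QOps (jn o) (mt o) (fun x => mt o a (cp o x)) (zr o) a (ex o).

Definition prod_ops {A B} (o1 : qops A) (o2 : qops B) : qops (A * B) :=
  QOps (fun p q => (jn o1 (fst p) (fst q), jn o2 (snd p) (snd q)))
       (fun p q => (mt o1 (fst p) (fst q), mt o2 (snd p) (snd q)))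
       (fun p => (cp o1 (fst p), cp o2 (snd p)))
       (zr o1, zr o2) (on o1, on o2)
       (fun p => (ex o1 (fst p), ex o2 (snd p))).
Definition prod_set {A B} (S1 : A -> Prop) (S2 : B -> Prop) : A * B -> Prop :=
  fun p => S1 (fst p) /\ S2 (snd p).

Definition iso_on {A B} (SA : A -> Prop) (oA : qops A)
    (SB : B -> Prop) (oB : qops B) (f : A -> B) : Prop :=
  (forall x, SA x -> SB (f x)) /\
  (forall x y, SA x -> SA y -> f x = f y -> x = y) /\
  (forall z, SB z -> exists x, SA x /\ f x = z) /\
  (forall x y, SA x -> SA y -> f (jn oA x y) = jn oB (f x) (f y)) /\
  (forall x y, SA x -> SA y -> f (mt oA x y) = mt oB (f x) (f y)) /\
  (forall x, SA x -> f (cp oA x) = cp oB (f x)) /\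
  f (zr oA) = zr oB /\ f (on oA) = on oB /\
  (forall x, SA x -> f (ex oA x) = ex oB (f x)).

(* Main.v *)
Require Import Defs.

Definition OML {T} (o : qops T) := OML_on (fun _ => True) o.

From Stdlib Require Import Setoid.

Lemma jC {T} (o : qops T) (H : OML o) x y : jn o x y = jn o y x.
Proof. exact (jn_comm _ _ H x y I I). Qed.
Lemma mC {T} (o : qops T) (H : OML o) x y : mt o x y = mt o y x.
Proof. exact (mt_comm _ _ H x y I I). Qed.
Lemma jA {T} (o : qops T) (H : OML o) x y z : jn o x (jn o y z) = jn o (jn o x y) z.
Proof. exact (jn_assoc _ _ H x y z I I I). Qed.
Lemma mA {T} (o : qops T) (H : OML o) x y z : mt o x (mt o y z) = mt o (mt o x y) z.
Proof. exact (mt_assoc _ _ H x y z I I I). Qed.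
Lemma jM {T} (o : qops T) (H : OML o) x y : jn o x (mt o x y) = x.
Proof. exact (absorb_jm _ _ H x y I I). Qed.
Lemma mJ {T} (o : qops T) (H : OML o) x y : mt o x (jn o x y) = x.
Proof. exact (absorb_mj _ _ H x y I I). Qed.
Lemma cI {T} (o : qops T) (H : OML o) x : cp o (cp o x) = x.
Proof. exact (cp_invol _ _ H x I). Qed.
Lemma cA {T} (o : qops T) (H : OML o) x y : qle o x y -> qle o (cp o y) (cp o x).
Proof. exact (cp_anti _ _ H x y I I). Qed.
Lemma cM {T} (o : qops T) (H : OML o) x : mt o x (cp o x) = zr o.
Proof. exact (cp_mt _ _ H x I). Qed.
Lemma cJ {T} (o : qops T) (H : OML o) x : jn o x (cp o x) = on o.
Proof. exact (cp_jn _ _ H x I). Qed.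
Lemma om {T} (o : qops T) (H : OML o) x y : qle o x y -> jn o x (mt o (cp o x) y) = y.
Proof. exact (orthomod _ _ H x y I I). Qed.
Lemma zl {T} (o : qops T) (H : OML o) x : qle o (zr o) x.
Proof. exact (zr_le _ _ H x I). Qed.
Lemma lo {T} (o : qops T) (H : OML o) x : qle o x (on o).
Proof. exact (le_on _ _ H x I). Qed.

Lemma mI {T} (o : qops T) (H : OML o) x : mt o x x = x.
Proof. rewrite <- (jM o H x x) at 2. apply mJ; auto. Qed.
Lemma le_refl {T} (o : qops T) (H : OML o) x : qle o x x.
Proof. apply (mI o H); auto. Qed.
Lemma le_trans {T} (o : qops T) (H : OML o) x y z : qle o x y -> qle o y z -> qle o x z.
Proof. unfold qle; intros H1 H2. rewrite <- H1, <- mA, H2; auto. Qed.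
Lemma le_anti {T} (o : qops T) (H : OML o) x y : qle o x y -> qle o y x -> x = y.
Proof. unfold qle; intros H1 H2. transitivity (mt o x y); [symmetry; exact H1|]. rewrite mC by auto. exact H2. Qed.
Lemma le_jn {T} (o : qops T) (H : OML o) x y : qle o x y -> jn o x y = y.
Proof. unfold qle; intros H1. rewrite <- H1, jC, mC by auto. apply jM; auto. Qed.
Lemma jn_le {T} (o : qops T) (H : OML o) x y : jn o x y = y -> qle o x y.
Proof. unfold qle; intros H1. rewrite <- H1. apply mJ; auto. Qed.
Lemma le_jl {T} (o : qops T) (H : OML o) x y : qle o x (jn o x y).
Proof. apply mJ; auto. Qed.
Lemma le_jr {T} (o : qops T) (H : OML o) x y : qle o y (jn o x y).
Proof. rewrite jC by auto. apply mJ; auto. Qed.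
Lemma le_ml {T} (o : qops T) (H : OML o) x y : qle o (mt o x y) x.
Proof. unfold qle. rewrite mC, mA, mI by auto. reflexivity. Qed.
Lemma le_mr {T} (o : qops T) (H : OML o) x y : qle o (mt o x y) y.
Proof. unfold qle. rewrite <- mA, mI by auto. reflexivity. Qed.
Lemma glb {T} (o : qops T) (H : OML o) x y z : qle o z x -> qle o z y -> qle o z (mt o x y).
Proof. unfold qle; intros H1 H2. rewrite mA, H1, H2 by auto. reflexivity. Qed.
Lemma lub {T} (o : qops T) (H : OML o) x y z : qle o x z -> qle o y z -> qle o (jn o x y) z.
Proof. intros H1 H2. apply (jn_le o H); auto. rewrite <- jA by auto.
  rewrite (le_jn o H y z H2). apply (le_jn o H); auto. Qed.
Lemma mono_m {T} (o : qops T) (H : OML o) x y z : qle o x y -> qle o (mt o x z) (mt o y z).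
Proof. intros H1. apply (glb o H); auto. eapply (le_trans o H); eauto. apply (le_ml o H); auto. apply (le_mr o H); auto. Qed.
Lemma mono_j {T} (o : qops T) (H : OML o) x y z : qle o x y -> qle o (jn o z x) (jn o z y).
Proof. intros H1. apply (lub o H); auto. apply (le_jl o H); auto. eapply (le_trans o H); eauto. apply (le_jr o H); auto. Qed.
Lemma dm1 {T} (o : qops T) (H : OML o) x y : cp o (jn o x y) = mt o (cp o x) (cp o y).
Proof. apply (le_anti o H); auto.
  - apply (glb o H); auto; apply (cA o H); auto; [apply (le_jl o H) | apply (le_jr o H)]; auto.
  - rewrite <- (cI o H (mt o (cp o x) (cp o y))). apply (cA o H); auto. apply (lub o H); auto.
    + rewrite <- (cI o H x) at 1. apply (cA o H); auto. apply (le_ml o H); auto.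
    + rewrite <- (cI o H y) at 1. apply (cA o H); auto. apply (le_mr o H); auto.
Qed.
Lemma dm2 {T} (o : qops T) (H : OML o) x y : cp o (mt o x y) = jn o (cp o x) (cp o y).
Proof. rewrite <- (cI o H (jn o (cp o x) (cp o y))). rewrite dm1, !cI by auto. reflexivity. Qed.
Lemma le_cp {T} (o : qops T) (H : OML o) x y : qle o x (cp o y) -> qle o y (cp o x).
Proof. intros H1. apply (cA o H) in H1; auto. rewrite cI in H1; auto. Qed.
Lemma om2 {T} (o : qops T) (H : OML o) p c : qle o p c -> mt o (jn o p (cp o c)) c = p.
Proof. intros H1. rewrite <- (cI o H (mt o (jn o p (cp o c)) c)). rewrite (dm2 o H), (dm1 o H p), (cI o H c) by auto.
  apply (cA o H) in H1; auto. apply (om o H) in H1; auto. rewrite cI in H1 by auto.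
  rewrite jC, mC by auto. rewrite H1. apply cI; auto. Qed.
Lemma split1 {T} (o : qops T) (H : OML o) p q c : qle o p c -> qle o q (cp o c) -> mt o (jn o p q) c = p.
Proof. intros H1 H2. apply (le_anti o H); auto.
  - rewrite <- (om2 o H p c H1) at 2. apply (mono_m o H); auto. apply (mono_j o H); auto.
  - apply (glb o H); auto. apply (le_jl o H); auto. Qed.
Lemma split2 {T} (o : qops T) (H : OML o) p q c : qle o p c -> qle o q (cp o c) -> mt o (jn o p q) (cp o c) = q.
Proof. intros H1 H2. rewrite jC by auto. apply (split1 o H); auto. rewrite cI; auto. Qed.

Lemma sym_gen {T} (o : qops T) (H : OML o) s t x : qle o s x -> qle o t (cp o x) ->
  x = jn o (mt o x (jn o s t)) (mt o x (cp o (jn o s t))).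
Proof. intros H1 H2.
  rewrite (mC o H x (jn o s t)), split1 by auto.
  rewrite dm1 by auto. apply (le_cp o H) in H2; auto.
  rewrite (mC o H (cp o s)), mA, H2 by auto.
  rewrite mC by auto. symmetry. apply (om o H); auto. Qed.

Lemma sym {T} (o : qops T) (H : OML o) a x : commutes o a x -> commutes o x a.
Proof. unfold commutes. intros Ha.
  pose proof (sym_gen o H (mt o a x) (mt o a (cp o x)) x) as K.
  rewrite <- Ha in K. apply K; auto. apply (le_mr o H); auto. apply (le_mr o H); auto. Qed.

Definition D {T} (o : qops T) c x := exists p q, qle o p c /\ qle o q (cp o c) /\ x = jn o p q.

Lemma D_of {T} (o : qops T) (H : OML o) c x : commutes o x c -> D o c x.
Proof. unfold commutes; intros Hx. exists (mt o x c), (mt o x (cp o c)).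
  split; [apply (le_mr o H)|split;[apply (le_mr o H)|]]; auto. Qed.
Lemma of_D {T} (o : qops T) (H : OML o) c x : D o c x -> commutes o x c.
Proof. intros (p & q & H1 & H2 & ->). unfold commutes.
  rewrite split1, split2 by auto. reflexivity. Qed.
Lemma D_swap {T} (o : qops T) (H : OML o) c x : D o c x -> D o (cp o c) x.
Proof. intros (p & q & H1 & H2 & ->). exists q, p. rewrite cI by auto.
  split; auto; split; auto. apply (jC o H); auto. Qed.
Lemma D_J {T} (o : qops T) (H : OML o) c x y : D o c x -> D o c y -> D o c (jn o x y).
Proof. intros (p & q & H1 & H2 & ->) (p' & q' & H1' & H2' & ->).
  exists (jn o p p'), (jn o q q'). split; [apply (lub o H)|split;[apply (lub o H)|]]; auto.
  rewrite !jA by auto. f_equal. rewrite <- !jA by auto. f_equal. apply (jC o H); auto. Qed.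
Lemma D_C {T} (o : qops T) (H : OML o) c x : D o c x -> D o c (cp o x).
Proof. intros Hx. apply D_of; auto. apply sym; auto. apply of_D in Hx; auto.
  apply sym in Hx; auto. unfold commutes in *. rewrite cI by auto. rewrite jC by auto. exact Hx. Qed.
Lemma D_M {T} (o : qops T) (H : OML o) c x y : D o c x -> D o c y -> D o c (mt o x y).
Proof. intros Hx Hy. rewrite <- (cI o H (mt o x y)), dm2 by auto.
  apply D_C, D_J, D_C; auto; apply D_C; auto. Qed.

Lemma ex_mono {T} (o : qops T) (Q : QMA o) x y : qle o x y -> qle o (ex o x) (ex o y).
Proof. intros H1. pose proof (qma_oml _ _ Q) as H. apply (jn_le o H); auto.
  rewrite <- (Q3 _ _ Q x y I I). rewrite le_jn; auto. Qed.

Lemma ex_cp_fix {T} (o : qops T) (Q : QMA o) x : ex o x = x -> ex o (cp o x) = cp o x.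
Proof. intros E. pose proof (Q5 _ _ Q x I) as K. rewrite E in K. exact K. Qed.

Lemma ex_mt_fix {T} (o : qops T) (Q : QMA o) x y : ex o x = x -> ex o y = y -> ex o (mt o x y) = mt o x y.
Proof. intros Ex Ey. pose proof (qma_oml _ _ Q) as H.
  rewrite <- (cI o H (mt o x y)), dm2 by auto. apply ex_cp_fix; auto.
  rewrite (Q3 _ _ Q _ _ I I), !ex_cp_fix; auto. Qed.

Lemma D_ex {T} (o : qops T) (Q : QMA o) c x : ex o c = c -> D o c x -> D o c (ex o x).
Proof. intros E (p & q & H1 & H2 & ->). pose proof (qma_oml _ _ Q) as H.
  exists (ex o p), (ex o q). rewrite (Q3 _ _ Q _ _ I I). split; [|split]; auto.
  - rewrite <- E. apply ex_mono; auto.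
  - rewrite <- (ex_cp_fix o Q c E). apply ex_mono; auto. Qed.

Lemma interval_QMA {T} (o : qops T) (Q : QMA o) b : ex o b = b ->
  QMA_on (interval o b) (interval_ops o b).
Proof. intros E. pose proof (qma_oml _ _ Q) as H.
  unfold interval. constructor; simpl.
  - constructor; simpl; intros; auto.
    + apply (lub o H); auto.
    + apply (le_trans o H _ x); auto. apply (le_ml o H); auto.
    + apply (le_ml o H); auto.
    + apply (zl o H); auto.
    + apply (le_refl o H); auto.
    + apply (jC o H); auto.
    + apply (mC o H); auto.
    + apply jA; auto.
    + apply mA; auto.
    + apply jM; auto.
    + apply mJ; auto.
    + apply (zl o H); auto.
    + rewrite (mC o H b), (mC o H b). apply (mono_m o H); auto. apply (cA o H); auto.
    + rewrite dm2, cI by auto. rewrite mC by auto. rewrite jC by auto.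
      apply (om2 o H); auto.
    + rewrite mA, (mC o H x b), <- mA, cM by auto. rewrite mC by auto. apply (zl o H); auto.
    + rewrite mC by auto. apply (om o H); auto.
    + unfold qle in H1. rewrite (mC o H b (cp o x)), <- mA, (mC o H b y), H1 by auto.
      apply (om o H); auto.
  - intros x Hx. rewrite <- E. apply ex_mono; auto.
  - exact (Q1 _ _ Q).
  - intros; apply (Q2 _ _ Q); auto.
  - intros; apply (Q3 _ _ Q); auto.
  - intros; apply (Q4 _ _ Q); auto.
  - intros p Hp. apply ex_mt_fix; auto. apply ex_cp_fix; auto. apply (Q4 _ _ Q); auto.
Qed.

Lemma hJ {T} (o : qops T) (H : OML o) c x y : D o c x -> D o c y ->
  mt o (jn o x y) c = jn o (mt o x c) (mt o y c).
Proof. intros Hx Hy. destruct (D_J o H c x y Hx Hy) as (p & q & H1 & H2 & E).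
  destruct Hx as (px & qx & Hx1 & Hx2 & ->). destruct Hy as (py & qy & Hy1 & Hy2 & ->).
  rewrite E, !(split1 o H) by auto.
  pose proof (split1 o H _ _ _ H1 H2) as K. rewrite <- E in K.
  assert (E2 : jn o (jn o px qx) (jn o py qy) = jn o (jn o px py) (jn o qx qy)).
  { rewrite !(jA o H). f_equal. rewrite <- !(jA o H). f_equal. apply (jC o H). }
  rewrite E2 in E. rewrite E2 in K. rewrite (split1 o H) in K; auto.
  - apply (lub o H); auto.
  - apply (lub o H); auto. Qed.

Lemma hM {T} (o : qops T) (H : OML o) c x y :
  mt o (mt o x y) c = mt o (mt o x c) (mt o y c).
Proof. symmetry. rewrite <- (mA o H x c (mt o y c)), (mC o H y c), (mA o H c c y), (mI o H),
  (mC o H c y), (mA o H). reflexivity. Qed.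

Lemma hC {T} (o : qops T) (H : OML o) c x : D o c x ->
  mt o (cp o x) c = mt o c (cp o (mt o x c)).
Proof. intros (p & q & H1 & H2 & ->). rewrite (split1 o H) by auto.
  rewrite (dm1 o H). apply (le_cp o H) in H2. unfold qle in H2.
  rewrite <- (mA o H), (mC o H (cp o q) c), H2. apply (mC o H). Qed.

Lemma hE {T} (o : qops T) (Q : QMA o) c x : ex o c = c -> ex o (cp o c) = cp o c -> D o c x ->
  mt o (ex o x) c = ex o (mt o x c).
Proof. intros E1 E2 (p & q & H1 & H2 & ->). pose proof (qma_oml _ _ Q) as H.
  rewrite (split1 o H) by auto. rewrite (Q3 _ _ Q _ _ I I). apply (split1 o H).
  - rewrite <- E1. apply ex_mono; auto.
  - rewrite <- E2. apply ex_mono; auto. Qed.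

Theorem mainTheorem5 (T : Type) (o : qops T) (a : T) :
  QMA o -> ex o a = a ->
  QMA_on (interval o a) (interval_ops o a) /\
  QMA_on (interval o (cp o a)) (interval_ops o (cp o a)) /\
  subalgebra o (fun x => commutes o a x) /\
  iso_on (fun x => commutes o a x) o
         (prod_set (interval o a) (interval o (cp o a)))
         (prod_ops (interval_ops o a) (interval_ops o (cp o a)))
         (fun x => (mt o x a, mt o x (cp o a))).
Proof.
  intros Q E. pose proof (qma_oml _ _ Q) as H.
  assert (Eca : ex o (cp o a) = cp o a) by (apply ex_cp_fix; auto).
  assert (Ecca : ex o (cp o (cp o a)) = cp o (cp o a)) by (rewrite (cI o H); auto).
  assert (cD : forall x, commutes o a x -> D o a x).
  { intros x Hx. apply (D_of o H). apply (sym o H); auto. }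
  assert (Dc : forall x, D o a x -> commutes o a x).
  { intros x Hx. apply (sym o H). apply (of_D o H); auto. }
  split; [apply interval_QMA; auto|].
  split; [apply interval_QMA; auto|].
  split.
  { unfold subalgebra. split; [|split; [|split; [|split; [|split]]]].
    - intros x y Hx Hy. apply Dc, (D_J o H); auto.
    - intros x y Hx Hy. apply Dc, (D_M o H); auto.
    - intros x Hx. apply Dc, (D_C o H); auto.
    - apply Dc. exists (zr o), (zr o). split; [apply (zl o H)|split;[apply (zl o H)|]].
      symmetry. apply (le_jn o H). apply (zl o H).
    - apply Dc. exists a, (cp o a). split; [apply (le_refl o H)|split;[apply (le_refl o H)|]].
      symmetry. apply (cJ o H).
    - intros x Hx. apply Dc, D_ex; auto. }
  unfold iso_on, prod_set, prod_ops, interval, interval_ops; simpl.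
  split; [|split; [|split; [|split; [|split; [|split; [|split; [|split]]]]]]].
  - intros x _. split; apply (le_mr o H).
  - intros x y Hx Hy Exy. injection Exy as E1 E2.
    apply (sym o H) in Hx. apply (sym o H) in Hy. unfold commutes in Hx, Hy.
    rewrite Hx, Hy, E1, E2. reflexivity.
  - intros [u v] [Hu Hv]. simpl in *. exists (jn o u v). split.
    + apply Dc. exists u, v. auto.
    + rewrite (split1 o H), (split2 o H) by auto. reflexivity.
  - intros x y Hx Hy. rewrite (hJ o H a), (hJ o H (cp o a)); auto;
      apply (D_swap o H); auto.
  - intros x y _ _. rewrite (hM o H a x y), (hM o H (cp o a) x y). reflexivity.
  - intros x Hx. rewrite (hC o H a), (hC o H (cp o a)); auto. apply (D_swap o H); auto.
  - rewrite (mC o H (zr o) a), (mC o H (zr o) (cp o a)).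
    pose proof (zl o H a) as Z1. pose proof (zl o H (cp o a)) as Z2. unfold qle in *.
    rewrite (mC o H a), (mC o H (cp o a)), Z1, Z2. reflexivity.
  - rewrite (mC o H (on o) a), (mC o H (on o) (cp o a)).
    pose proof (lo o H a) as Z1. pose proof (lo o H (cp o a)) as Z2. unfold qle in *.
    rewrite Z1, Z2. reflexivity.
  - intros x Hx. rewrite (hE o Q a), (hE o Q (cp o a)); auto. apply (D_swap o H); auto.
Qed.
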